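(* Let $n,k$ be integers with $8\le 2k\le n-2$, let $\eta=(\eta_1<\dots<\eta_l)\in\mathbb{D}_k$, and let $Y_{2\eta^*}$ be the Young diagram whose main diagonal consists of exactly the cells $c_{1,1},\dots,c_{l+1,l+1}$ and which satisfies $h_{1,1}=2n-4$, $h_{i,i}=2\eta_{l-(i-2)}$ for $2\le i\le l+1$, and $a(c_{i,i})=l(c_{i,i})+1$ for $1\le i\le l+1$. Let $\lambda$ be the partition whose parts are the hook lengths of the first-column cells of $Y_{2\eta^*}$. Then $\lambda$ is a partition of $T_{n,n-2k+1}=n(n+1)/2-(n-2k+1)$.
   Context: $\mathbb{D}_N$ is the set of partitions of $N$ into distinct parts, i.e. sequences $(\eta_1<\dots<\eta_l)$ of positive integers with sum $N$ and $l\ge 2$. Young diagrams are in English convention: rows top to bottom, columns left to right, $c_{i,j}$ the cell in row $i$, column $j$; arm $a(c_{i,j})$ = number of cells to its right in its row, leg $l(c_{i,j})$ = number of cells below it in its column, hook length $h_{i,j}=a+l+1$. *)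

(* Defs.v *)
From mathcomp Require Import all_boot.
Set Implicit Arguments. Unset Strict Implicit. Unset Printing Implicit Defensive.

(* A Young diagram is represented by its sequence of row lengths
   p = [:: p_1; p_2; ...] (English convention, rows top to bottom).
   Rows and columns are indexed from 1, as in the paper. *)
Definition is_partition (p : seq nat) : bool :=
  sorted geq p && all (fun x => 0 < x) p.

Definition rowlen (p : seq nat) (i : nat) : nat := nth 0 p i.-1.

Definition in_diag (p : seq nat) (i j : nat) : bool :=
  (1 <= i <= size p) && (1 <= j <= rowlen p i).

Definition arm (p : seq nat) (i j : nat) : nat := rowlen p i - j.

Definition leg (p : seq nat) (i j : nat) : nat :=
  count (fun r => j <= r) (drop i p).

Definition hook (p : seq nat) (i j : nat) : nat := arm p i j + leg p i j + 1.

Definition first_col_hooks (p : seq nat) : seq nat :=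
  [seq hook p i 1 | i <- iota 1 (size p)].

Definition distinct_part (N : nat) (eta : seq nat) : bool :=
  [&& sorted ltn eta, all (fun x => 0 < x) eta, sumn eta == N & 2 <= size eta].

Definition epart (eta : seq nat) (j : nat) : nat := nth 0 eta j.-1.

Definition is_partition_of (N : nat) (lam : seq nat) : bool :=
  is_partition lam && (sumn lam == N).

Definition Tnm (n m : nat) : nat := n * (n + 1) %/ 2 - m.

(* Main.v *)
Require Import Defs.
From mathcomp Require Import all_boot zify.

Lemma nth_map_pred (s : seq nat) j : nth 0 (map predn s) j = (nth 0 s j).-1.
Proof. elim: s j => [|x s IH] [|j] //=. Qed.

Lemma sorted_geq_zero (s : seq nat) : sorted geq (0 :: s) -> sumn s = 0.
Proof.
elim: s => [|x s IH] //= /andP [Hx Hp].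
have x0 : x = 0 by lia.
subst x. by rewrite IH.
Qed.

Lemma sumn_pred (s : seq nat) : sumn s = count (fun r => 0 < r) s + sumn (map predn s).
Proof. elim: s => [|x s IH] //=; rewrite IH; case: x => //= x; lia. Qed.

Lemma sum_hooks d : forall p : seq nat, sorted geq p ->
  (forall i, in_diag p i i = (1 <= i <= d)) ->
  sumn p = \sum_(1 <= i < d.+1) hook p i i.
Proof.
elim: d => [|d IH] p Hs Hd.
  rewrite big_geq //.
  have := Hd 1; rewrite /in_diag /rowlen /=.
  case: p Hs {Hd} => [|x s] //= Hs.
  case: x Hs => [|x] Hs /=; last by [].
  move=> _. exact: sorted_geq_zero.
have := Hd 1; rewrite /in_diag /rowlen /=.
case: p Hs Hd => [|x s] //= Hs Hd.
case: x Hs Hd => [|x] Hs Hd //= _.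
set p' := map predn s.
have Hs' : sorted geq p'.
  rewrite /p'. apply: (@homo_sorted _ _ predn geq geq); first (move=> a b /= ?; rewrite /geq /=; lia).
  exact: (path_sorted Hs).
have Hd' : forall i, in_diag p' i i = (1 <= i <= d).
  move=> i. have := Hd i.+1. rewrite /in_diag /rowlen /p' size_map /=.
  case: i => [|i] //=.
  rewrite nth_map_pred => H. rewrite -[i < d]ltnS -H ltnS.
  by case: (nth 0 s i) => [|[|y]]; rewrite ?ltn0 ?andbF.
rewrite [sumn s]sumn_pred -/p' (IH p' Hs' Hd') [RHS]big_nat_recl //.
have E : \sum_(1 <= i < d.+1) hook p' i i = \sum_(1 <= i < d.+1) hook (x.+1 :: s) i.+1 i.+1.
  rewrite !big_nat; apply: eq_bigr => i /andP [Hi1 _].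
  rewrite /hook /arm /leg /rowlen /p'.
  case: i Hi1 => [|i] // _ /=.
  rewrite nth_map_pred -map_drop count_map.
  rewrite (@eq_count _ _ (fun r => i.+2 <= r)); first lia.
  move=> r /=; apply/idP/idP; lia.
rewrite E.
rewrite /hook /arm /leg /rowlen /= drop0.
lia.
Qed.

Lemma bin_aux m : 'C(m.+3, 2) = 'C(m, 2) + m + m.+1 + m.+2.
Proof. rewrite binS (binS m.+1) (binS m) !bin1. lia. Qed.

Lemma half_aux n : n * (n + 1) %/ 2 = 'C(n.+1, 2).
Proof. by rewrite bin2 /= divn2 mulnC addn1. Qed.

Lemma count_drop_all (a : pred nat) s i : all a s -> count a (drop i s) = size s - i.
Proof.
elim: s i => [|x s IH] [|i] //= /andP [Hx Hs].
  by rewrite Hx -(drop0 s) (IH 0 Hs) drop0 subn0.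
exact: IH.
Qed.

Lemma fch_sum (s : seq nat) : all (fun x => 0 < x) s ->
  sumn (first_col_hooks s) = sumn s + 'C(size s, 2).
Proof.
rewrite /first_col_hooks.
elim: s => [|x s IH] //= /andP [Hx Hs].
rewrite -(addn1 1) iotaDl -map_comp.
have -> : map ((fun i => hook (x :: s) i 1) \o addn 1) (iota 1 (size s)) = map (fun i => hook s i 1) (iota 1 (size s)).
  apply/eq_in_map => i; rewrite mem_iota => /andP [Hi _] /=.
  rewrite /hook /arm /leg /rowlen /=.
  by case: i Hi.
rewrite IH // binS bin1 {1}/hook /arm /leg /rowlen /= drop0.
have -> : count (fun r => 1 <= r) s = size s.
  by have := @count_drop_all _ s 0 Hs; rewrite drop0 subn0.
lia.
Qed.

Theorem proposition5p2 (n k : nat) (eta : seq nat) (Y : seq nat) :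
  8 <= 2 * k -> 2 * k <= n - 2 ->
  distinct_part k eta ->
  is_partition Y ->
  (* the main diagonal of Y consists exactly of c_{1,1}, ..., c_{l+1,l+1} *)
  (forall i, in_diag Y i i = (1 <= i <= (size eta).+1)) ->
  hook Y 1 1 = 2 * n - 4 ->
  (forall i, 2 <= i <= (size eta).+1 ->
     hook Y i i = 2 * epart eta (size eta - (i - 2))) ->
  (forall i, 1 <= i <= (size eta).+1 -> arm Y i i = leg Y i i + 1) ->
  is_partition_of (Tnm n (n - 2 * k + 1)) (first_col_hooks Y).
Proof.
move=> Hk Hkn /and4P[Hes Hepos /eqP Hsum Hl] /andP[HYs HYpos] Hdiag H11 Hhook Harm.
set l := size eta in Hdiag Hhook Harm.
have SY : sumn Y = \sum_(1 <= i < l.+2) hook Y i i := @sum_hooks l.+1 Y HYs Hdiag.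
have SE : \sum_(1 <= i < l.+2) hook Y i i = 2 * n - 4 + 2 * k.
  rewrite big_nat_recl // H11. congr (_ + _).
  rewrite (@eq_big_nat _ _ _ _ _ _ (fun i => 2 * nth 0 eta (l - i))); last first.
    move=> i /andP[Hi1 Hi2]. rewrite Hhook; last lia. rewrite /epart.
    congr (2 * nth 0 eta _). lia.
  rewrite -big_distrr /= -Hsum. congr (2 * _).
  rewrite big_nat_rev /=.
  rewrite (@eq_big_nat _ _ _ _ _ _ (fun i => nth 0 eta i.-1)); last first.
    move=> i /andP[Hi1 Hi2]. congr (nth 0 eta _). lia.
  by rewrite big_add1 /= sumnE [RHS](big_nth 0).
have Hm : size Y = n - 2.
  have := Harm 1 isT. have := H11. rewrite /hook /leg count_drop_all //.
  have := Hdiag 1. rewrite /in_diag /=. lia.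
rewrite /is_partition_of; apply/andP; split.
  apply/andP; split; last first.
    by apply/allP => h /mapP [i _ ->]; rewrite /hook addn1.
  apply/(sortedP 0) => i; rewrite /first_col_hooks size_map size_iota => Hi.
  rewrite !(nth_map 0) ?size_iota; try lia.
  rewrite !nth_iota; try lia.
  rewrite /hook /arm /leg /rowlen !count_drop_all //.
  have := (sortedP 0 HYs) i Hi. rewrite /= add1n add1n /=. have := (allP HYpos) _ (mem_nth 0 Hi). rewrite !add0n /=. lia.
rewrite fch_sum // SY SE /Tnm half_aux Hm.
have [m Em] : exists m, n = m.+3 by exists (n - 3); lia.
rewrite Em bin_aux -Em.
have -> : n - 2 = m.+1 by lia.
apply/eqP; lia.
Qed.
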